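(* Let $\Omega\subset\mathbb{R}^n$ be a domain, $x,y\in\Omega$, and $\gamma\subset\Omega$ a rectifiable curve joining $x$ to $y$. Suppose that for some $\alpha\in(0,1)$ and $C\ge1$, $$\int_\gamma\operatorname{dist}(z,\partial\Omega)^{\alpha-1}ds(z)\le C\,\operatorname{length}(\gamma)^\alpha.$$ Then (i) there exists $\bar z\in\gamma$ with $\operatorname{length}(\gamma)\le C^{\frac1{1-\alpha}}\operatorname{dist}(\bar z,\partial\Omega)$; and (ii) $$\frac1{\operatorname{length}(\gamma)}\int_\gamma\operatorname{dist}(z,\partial\Omega)^{\alpha-1}ds(z)\le 2C\inf_{z\in\gamma}\operatorname{dist}(z,\partial\Omega)^{\alpha-1}.$$
   Context: $ds$ denotes arc length measure; distances are Euclidean. *)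

(* Defs.v *)
From HB Require Import structures.
From mathcomp Require Import all_boot all_order all_algebra.
From mathcomp Require Import all_classical all_reals all_analysis.
Set Implicit Arguments. Unset Strict Implicit. Unset Printing Implicit Defensive.
Import Order.TTheory GRing.Theory Num.Theory.
Import numFieldNormedType.Exports.
Local Open Scope classical_set_scope.
Local Open Scope ring_scope.

Section defs.
Context {R : realType} {n : nat}.
Notation V := 'rV[R]_n.

(* Euclidean distance in R^n (the library norm on 'rV is the sup norm). *)
Definition edist (u v : V) : R := Num.sqrt (\sum_(i < n) (u ord0 i - v ord0 i) ^+ 2).

(* Polygonal length of curve g : R -> R^n along a partition s of [a,b]
   (points a < s_1 < ... < s_k = b). *)
Definition cvariation (g : R -> V) (a b : R) (s : seq R) : R :=
  \sum_(0 <= k < size s) edist (g (nth b (a :: s) k.+1)) (g (nth b (a :: s) k)).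

Definition cvariations (g : R -> V) (a b : R) : set R :=
  [set cvariation g a b s | s in [set s | itv_partition a b s]].

Definition curve_length (g : R -> V) (a b : R) : R := sup (cvariations g a b).

Definition rectifiable (g : R -> V) (a b : R) : Prop := has_ubound (cvariations g a b).

(* normal (arc-length) representation g0 : [0, length] -> R^n, g0 (s_g t) = g t *)
Definition normal_rep (g : R -> V) (a b : R) (s : R) : V :=
  g (xget a [set t | a <= t <= b /\ curve_length g a t = s]).

Definition param_interval (g : R -> V) (a b : R) : set R :=
  `[0, curve_length g a b].

Definition line_integral (g : R -> V) (a b : R) (f : V -> R) : \bar R :=
  (\int[lebesgue_measure]_(s in param_interval g a b) (f (normal_rep g a b s))%:E)%E.

Definition boundary (O : set V) : set V := closure O `\` interior O.

Definition dist_bd (O : set V) (z : V) : R := inf [set edist z w | w in boundary O].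

Definition domain (O : set V) : Prop := [/\ open O, connected O & O !=set0].

End defs.

(* Main.v *)
Require Import Defs.
From HB Require Import structures.
From mathcomp Require Import all_boot all_order all_algebra.
From mathcomp Require Import all_classical all_reals all_analysis.
From mathcomp Require Import ring lra.
Import Order.TTheory GRing.Theory Num.Theory.
Import numFieldNormedType.Exports.
Local Open Scope classical_set_scope.
Local Open Scope ring_scope.
Set Implicit Arguments.
Section helpers.
Variables (R : realType) (n : nat).
Notation V := 'rV[R]_n.
Local Notation edist := (@Defs.edist R n).

Lemma CS (a b : 'I_n -> R) :
  (\sum_i a i * b i) ^+ 2 <= (\sum_i a i ^+ 2) * (\sum_i b i ^+ 2).
Proof.
set A := \sum_i a i ^+ 2; set B := \sum_i b i ^+ 2; set P := \sum_i a i * b i.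
have A0 : 0 <= A by apply: sumr_ge0 => i _; exact: sqr_ge0.
have B0 : 0 <= B by apply: sumr_ge0 => i _; exact: sqr_ge0.
have key t : 0 <= t ^+ 2 * A + 2 * t * P + B.
  have -> : t ^+ 2 * A + 2 * t * P + B = \sum_i (t * a i + b i) ^+ 2.
    rewrite /A /P /B mulr_sumr mulr_sumr -!big_split /=.
    by apply: eq_bigr => i _; rewrite sqrrD exprMn; ring.
  by apply: sumr_ge0 => i _; exact: sqr_ge0.
have [A00|Agt0] := eqVneq A 0.
  have a0 i : a i = 0.
    apply/eqP; rewrite -sqrf_eq0; apply/eqP/le_anti; rewrite sqr_ge0 andbT.
    rewrite -A00 /A (bigD1 i) //= lerDl; apply: sumr_ge0 => j _; exact: sqr_ge0.
  have -> : P = 0 by rewrite /P big1 // => i _; rewrite a0 mul0r.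
  by rewrite expr0n /= mulr_ge0.
have Ap : 0 < A by rewrite lt_def Agt0 A0.
have := key (- P / A).
have -> : (- P / A) ^+ 2 * A + 2 * (- P / A) * P + B = B - P ^+ 2 / A.
  by field; rewrite Agt0.
rewrite subr_ge0 ler_pdivrMr // mulrC => h; exact: h.
Qed.

Lemma edist_ge0 (u v : V) : 0 <= edist u v.
Proof. exact: sqrtr_ge0. Qed.

Lemma edist_sym (u v : V) : edist u v = edist v u.
Proof. by rewrite /edist; congr Num.sqrt; apply: eq_bigr => i _; rewrite -sqrrN opprB. Qed.

Lemma edist_triangle (u v w : V) : edist u w <= edist u v + edist v w.
Proof.
rewrite /edist.
set a := fun i : 'I_n => u ord0 i - v ord0 i.
set b := fun i : 'I_n => v ord0 i - w ord0 i.
have -> : \sum_(i < n) (u ord0 i - w ord0 i) ^+ 2 = \sum_i (a i + b i) ^+ 2.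
  by apply: eq_bigr => i _; rewrite /a /b; congr (_ ^+ 2); ring.
set A := \sum_i a i ^+ 2; set B := \sum_i b i ^+ 2.
have A0 : 0 <= A by apply: sumr_ge0 => i _; exact: sqr_ge0.
have B0 : 0 <= B by apply: sumr_ge0 => i _; exact: sqr_ge0.
have -> : \sum_i (a i + b i) ^+ 2 = A + 2 * (\sum_i a i * b i) + B.
  rewrite /A /B mulr_sumr -!big_split /=.
  by apply: eq_bigr => i _; rewrite sqrrD; ring.
have hP : \sum_i a i * b i <= Num.sqrt A * Num.sqrt B.
  rewrite -sqrtrM //.
  apply: le_trans (ler_norm _) _; rewrite -sqrtr_sqr ler_wsqrtr //; exact: CS.
rewrite -[X in _ <= X]ger0_norm ?addr_ge0 ?sqrtr_ge0// -sqrtr_sqr ler_wsqrtr //.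
rewrite sqrrD !sqr_sqrtr //; lra.
Qed.

Lemma mx_norm_comp (u : V) i : `|u ord0 i| <= `|u|.
Proof.
rewrite [leRHS]/Num.norm /= mx_normrE; apply/bigmax_geP; right => /=.
by exists (ord0, i).
Qed.

Lemma edist_comp (u v : V) i : `|u ord0 i - v ord0 i| <= edist u v.
Proof.
rewrite /edist -sqrtr_sqr ler_wsqrtr // (bigD1 i) //= lerDl.
by apply: sumr_ge0 => j _; exact: sqr_ge0.
Qed.

Lemma edist_le_norm (u v : V) : edist u v <= n.+1%:R * `|u - v|.
Proof.
rewrite /edist -(ger0_norm (mulr_ge0 (ler0n _ _) (normr_ge0 (u - v)))).
rewrite -sqrtr_sqr ler_wsqrtr // exprMn.
apply: le_trans (_ : \sum_(i < n) `|u - v| ^+ 2 <= _).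
  apply: ler_sum => i _; rewrite -real_normK ?num_real //.
  rewrite lerXn2r ?nnegrE ?normr_ge0 //.
  by apply: le_trans (mx_norm_comp (u - v) i); rewrite !mxE.
rewrite sumr_const card_ord -[_ *+ n]mulr_natl ler_wpM2r ?sqr_ge0 // -natrX ler_nat.
by rewrite expnS (leq_trans (leqnSn n)) // leq_pmulr.
Qed.


Lemma d_ge0 (O : set V) z : 0 <= dist_bd O z.
Proof.
rewrite /dist_bd; set S := [set _ | _ in _].
have [->|ne] := eqVneq S set0; first by rewrite inf0.
apply: lb_le_inf; first exact/set0P.
by move=> _ [w _ <-]; exact: edist_ge0.
Qed.

Lemma d_le {O : set V} z w : boundary O w -> dist_bd O z <= edist z w.
Proof.
move=> bw; apply: (@ge_inf _ [set edist z u | u in boundary O]); last by exists w.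
by exists 0 => _ [u _ <-]; exact: edist_ge0.
Qed.

Lemma d_lip (O : set V) z y : boundary O !=set0 ->
  dist_bd O z <= dist_bd O y + edist z y.
Proof.
move=> [w0 bw0]; rewrite -lerBlDr; apply: lb_le_inf; first by exists (edist y w0), w0.
move=> _ [w bw <-]; rewrite lerBlDr addrC.
exact: le_trans (d_le _ bw) (edist_triangle z y w).
Qed.

Lemma d_cont (O : set V) : boundary O !=set0 -> continuous (dist_bd O).
Proof.
move=> bne z; apply/(@cvgrPdist_lt _ _ _ (nbhs z) (nbhs_filter z)) => e e0.
have k0 : 0 < n.+1%:R :> R by [].
near=> y.
apply: (@le_lt_trans _ _ (edist z y)).
  rewrite ler_norml; apply/andP; split.
    by have := d_lip y z bne; rewrite edist_sym; lra.
  by have := d_lip z y bne; lra.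
apply: le_lt_trans (edist_le_norm z y) _.
rewrite mulrC -ltr_pdivlMr //.
near: y; apply/nbhs_ballP; exists (e / n.+1%:R); first by rewrite /= divr_gt0.
by move=> y; rewrite -ball_normE.
Unshelve. all: by end_near.
Qed.

Lemma d_pos (O : set V) z : open O -> O z -> boundary O !=set0 -> 0 < dist_bd O z.
Proof.
move=> Oo Oz [w0 bw0].
have : nbhs z O by move: Oo; rewrite openE; apply.
case/nbhs_ballP => e e0 sub.
apply: (@lt_le_trans _ _ e) => //.
apply: lb_le_inf; first by exists (edist z w0), w0.
move=> _ [w [_ nintw] <-].
have nOw : ~ O w by move=> Ow; apply: nintw; move: Oo; rewrite openE; apply.
have ge : e <= `|z - w|.
  by rewrite leNgt; apply/negP => lt; apply: nOw; apply: sub; rewrite -ball_normE.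
have nz : `|z - w| != 0 by rewrite gt_eqF // (lt_le_trans e0).
have [[i j] /= hij] := mx_norm_neq0 nz.
have ge' : e <= mx_norm (z - w) := ge.
rewrite hij (ord1 i) !mxE in ge'; exact: le_trans ge' (edist_comp _ _ _).
Qed.

Lemma bd_ne (O : set V) : domain O -> O <> setT -> boundary O !=set0.
Proof.
case=> Oo _ [p Op] OT.
apply: contrapT => nb.
have cl : closed O.
  move=> w cw; apply: interior_subset; apply: contrapT => ni; apply: nb.
  by exists w; split.
have [q nOq] : exists q, ~ O q.
  apply: contrapT => hq; apply: OT; apply/seteqP; split => // x _.
  by apply: contrapT => nx; apply: hq; exists x.
pose h (t : R) : V := p + t *: (q - p).
have hc : {within `[0, 1], continuous h}.
  apply: continuous_subspaceT => t; apply: cvgD; first exact: cvg_cst.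
  by apply: cvgZr_tmp; exact: cvg_id.
have cc := connected_continuous_connected (@segment_connected R 0 1) hc.
have E : h @` `[0, 1] `&` O = h @` `[0, 1].
  apply: cc; last by exists O.
  - exists p; split => //; exists 0; last by rewrite /h scale0r addr0.
    by rewrite /= in_itv /= lexx ler01.
  - by exists O.
have : (h @` `[0, 1]) q.
  exists 1; last by rewrite /h scale1r addrC subrK.
  by rewrite /= in_itv /= lexx ler01.
by rewrite -E => -[].
Qed.

Lemma cvar_ub (g : R -> V) a b s v : rectifiable g a b -> itv_partition a b s ->
  v <= cvariation g a b s -> v <= curve_length g a b.
Proof.
move=> rg ps vle; apply: le_trans vle _.
by apply: (ub_le_sup rg); exists s.
Qed.

Lemma len_ge0 (g : R -> V) a b : a <= b -> rectifiable g a b -> 0 <= curve_length g a b.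
Proof.
rewrite le_eqVlt => /predU1P[<-|ab] rg.
  apply: (@cvar_ub _ _ _ [::]) => //.
  by rewrite /Defs.cvariation big_geq.
apply: (@cvar_ub _ _ _ [:: b]) => //; first by split; rewrite /= ?ab ?eqxx.
by rewrite /Defs.cvariation unlock /= addr0 edist_ge0.
Qed.

Lemma edist_le_len (g : R -> V) a b t1 t2 : rectifiable g a b ->
  a <= t1 <= b -> a <= t2 <= b -> edist (g t1) (g t2) <= curve_length g a b.
Proof.
wlog t12 : t1 t2 / t1 <= t2.
  move=> H rg h1 h2; have [|] := leP t1 t2; first by move=> ?; exact: H.
  by move=> /ltW t21; rewrite edist_sym; exact: H.
move=> rg /andP[at1 t1b] /andP[at2 t2b].
have ab : a <= b by exact: le_trans at1 t1b.
move: t12; rewrite le_eqVlt => /predU1P[<-|t12].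
  rewrite /edist /Defs.edist big1 ?sqrtr0; first exact: len_ge0.
  by move=> i _; rewrite subrr expr0n.
move: at1; rewrite le_eqVlt => /predU1P[e1|at1];
  move: t2b; rewrite le_eqVlt => /predU1P[e2|t2b]; try subst t1; try subst t2.
- apply: (@cvar_ub _ _ _ [:: b]) => //; first by split; rewrite /= ?t12 ?eqxx.
  by rewrite /Defs.cvariation unlock /= addr0 edist_sym.
- apply: (@cvar_ub _ _ _ [:: t2; b]) => //; first by split; rewrite /= ?t12 ?t2b ?eqxx.
  rewrite /Defs.cvariation unlock /= addr0 edist_sym.
  by have := edist_ge0 (g b) (g t2); lra.
- apply: (@cvar_ub _ _ _ [:: t1; b]) => //; first by split; rewrite /= ?at1 ?t12 ?eqxx.
  rewrite /Defs.cvariation unlock /= addr0 [edist (g b) _]edist_sym.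
  by have := edist_ge0 (g t1) (g a); lra.
- apply: (@cvar_ub _ _ _ [:: t1; t2; b]) => //; first by split; rewrite /= ?at1 ?t12 ?t2b ?eqxx.
  rewrite /Defs.cvariation unlock /= addr0 [edist (g t2) _]edist_sym.
  by have := edist_ge0 (g t1) (g a); have := edist_ge0 (g b) (g t2); lra.
Qed.

Lemma nr_in (g : R -> V) a b s : a <= b -> (g @` `[a, b]) (normal_rep g a b s).
Proof.
move=> ab; rewrite /normal_rep.
pose P := [set t | a <= t <= b /\ curve_length g a t = s].
rewrite -/P.
have [ex|nex] := pselect (exists t, P t).
  have [/andP[h1 h2] _] := xgetPex a ex.
  by exists (xget a P) => //; rewrite /= in_itv /= h1 h2.
rewrite xgetPN; last by move=> t Pt; apply: nex; exists t.
by exists a => //; rewrite /= in_itv /= lexx ab.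
Qed.

Lemma int_mono (D : set R) (f1 f2 : R -> \bar R) :
  (forall x, D x -> (0 <= f1 x)%E) -> (forall x, D x -> (f1 x <= f2 x)%E) ->
  (\int[lebesgue_measure]_(x in D) f1 x <= \int[lebesgue_measure]_(x in D) f2 x)%E.
Proof.
move=> f10 f12.
have f20 : forall x, D x -> (0 <= f2 x)%E by move=> x Dx; exact: le_trans (f10 _ Dx) (f12 _ Dx).
rewrite !ge0_integralE //.
apply: ge_ereal_sup => _ [h hle <-]; apply: ereal_sup_ubound; exists h => //= x.
apply: le_trans (hle x) _; rewrite /patch; case: ifP => // /[1!inE] Dx.
exact: f12.
Qed.

Lemma int_cst (L c : R) : 0 <= L ->
  (\int[lebesgue_measure]_(x in (`[0%R, L]%classic : set R)) (c%:E) = (c * L)%:E)%E.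
Proof.
move=> L0; rewrite integral_cst /=; last exact: measurable_itv.
rewrite lebesgue_measure_itv /=.
case: ifP => [_|]; first by rewrite -EFinD subr0 -EFinM.
rewrite lte_fin => /negbT; rewrite -leNgt => L0'.
by have -> : L = 0 by apply: le_anti; rewrite L0 L0'.
Qed.


Lemma powR_anti (x y r : R) : 0 < x -> x <= y -> r <= 0 -> y `^ r <= x `^ r.
Proof.
move=> x0 xy r0.
have y0 : 0 < y by exact: lt_le_trans xy.
have e z : z `^ r = (z `^ (-r))^-1 by rewrite -powRN opprK.
rewrite !e lef_pV2 ?posrE ?powR_gt0 //.
by apply: (ge0_ler_powR (r:=-r)) => //; rewrite ?oppr_ge0 // nnegrE ltW.
Qed.

Lemma li_lower (g : R -> V) a b (f : V -> R) c : a <= b -> rectifiable g a b -> 0 <= c ->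
  (forall z, (g @` `[a, b]) z -> c <= f z) ->
  ((c * curve_length g a b)%:E <= line_integral g a b f)%E.
Proof.
move=> ab rg c0 cf; rewrite /line_integral /param_interval -int_cst ?len_ge0 //.
apply: int_mono => s _; first by rewrite lee_fin.
by rewrite lee_fin; apply: cf; exact: nr_in.
Qed.

Lemma li_upper (g : R -> V) a b (f : V -> R) c : a <= b -> rectifiable g a b ->
  (forall z, (g @` `[a, b]) z -> 0 <= f z <= c) ->
  (line_integral g a b f <= (c * curve_length g a b)%:E)%E.
Proof.
move=> ab rg cf; rewrite /line_integral /param_interval -int_cst ?len_ge0 //.
apply: int_mono => s _.
  by rewrite lee_fin; have /andP[] := cf _ (nr_in g a b s ab).
by rewrite lee_fin; have /andP[] := cf _ (nr_in g a b s ab).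
Qed.

Lemma li_ge0 (g : R -> V) a b (f : V -> R) : a <= b ->
  (forall z, (g @` `[a, b]) z -> 0 <= f z) -> (0 <= line_integral g a b f)%E.
Proof.
move=> ab f0; apply: integral_ge0 => s _; rewrite lee_fin; apply: f0; exact: nr_in.
Qed.

End helpers.
Unset Implicit Arguments.

Theorem lemma2p2 (R : realType) (n : nat) (O : set 'rV[R]_n) (x y : 'rV[R]_n)
    (g : R -> 'rV[R]_n) (a b alpha C : R) :
  domain O -> O <> setT ->
  O x -> O y ->
  a <= b -> {within `[a, b], continuous g} ->
  g a = x -> g b = y -> g @` `[a, b] `<=` O ->
  rectifiable g a b ->
  0 < alpha < 1 -> 1 <= C ->
  (line_integral g a b (fun z => (dist_bd O z `^ (alpha - 1))%R)
     <= (C * curve_length g a b `^ alpha)%R%:E)%E ->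
  (exists2 zb, (g @` `[a, b]) zb &
     curve_length g a b <= C `^ (1 - alpha)^-1 * dist_bd O zb)
  /\
  (((curve_length g a b)^-1)%R%:E
     * line_integral g a b (fun z => (dist_bd O z `^ (alpha - 1))%R)
   <= (2 * C * inf [set dist_bd O z `^ (alpha - 1) | z in g @` `[a, b]])%R%:E)%E.
Proof.
move=> dO OT Ox Oy ab gc ga gb gO rg /andP[al0 al1] C1 hI.
have bne := bd_ne dO OT.
have Oo : open O by case: dO.
have dpos z : (g @` `[a, b]) z -> 0 < dist_bd O z.
  by move=> gz; apply: d_pos => //; exact: gO.
set L := curve_length g a b.
set F := (fun z => dist_bd O z `^ (alpha - 1)).
have L0 : 0 <= L by exact: len_ge0.
have C0 : 0 < C by exact: lt_le_trans ltr01 C1.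
have am1 : alpha - 1 <= 0 by rewrite subr_le0 ltW.
have e1 : L `^ alpha = L * L `^ (alpha - 1).
  have [->|Lp] := eqVneq L 0; first by rewrite mul0r powR0 // gt_eqF.
  by rewrite -{2}(powRr1 L0) -powRD ?Lp ?implybT // addrC subrK.
have eN u : u `^ (alpha - 1) = (u `^ (1 - alpha))^-1 by rewrite -powRN opprB.
split.
  have cont : {within `[a, b], continuous (fun t => dist_bd O (g t))}.
    by move=> t; apply: (continuous_comp (gc t)); exact: d_cont.
  have [c cin cmax] := EVT_max ab cont.
  have gcin : (g @` `[a, b]) (g c) by exists c.
  set D := dist_bd O (g c).
  have D0 : 0 < D by exact: dpos.
  exists (g c) => //.
  have [L00|Lp] := eqVneq L 0.
    by rewrite L00 mulr_ge0 ?powR_ge0 ?d_ge0.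
  have Lp' : 0 < L by rewrite lt_def Lp L0.
  have low := li_lower F (D `^ (alpha - 1)) ab rg (powR_ge0 _ _)
    (fun z '(ex_intro2 t tin gtz) => ltac:(rewrite -gtz; exact: powR_anti (dpos _ (ex_intro2 _ _ t tin erefl)) (cmax t tin) am1)).
  have h := le_trans low hI; rewrite lee_fin e1 mulrA -[X in _ <= X]mulrA [L * _]mulrC mulrA ler_pM2r // in h.
  rewrite !eN in h.
  set u := D `^ (1 - alpha) in h; set v := L `^ (1 - alpha) in h.
  have up : 0 < u by rewrite powR_gt0.
  have vp : 0 < v by rewrite powR_gt0.
  have h2 : v <= C * u.
    have := ler_wpM2r (ltW (mulr_gt0 up vp)) h.
    have -> : u^-1 * (u * v) = v by rewrite mulrA mulVf ?mul1r // gt_eqF.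
    have -> : C * v^-1 * (u * v) = C * u.
      by rewrite [u * v]mulrC mulrA -[C * v^-1 * v]mulrA mulVf ?mulr1 // gt_eqF.
    by [].
  have bp : 0 < 1 - alpha by rewrite subr_gt0.
  have bi : 0 < (1 - alpha)^-1 by rewrite invr_gt0.
  have h3 := ge0_ler_powR (r := (1 - alpha)^-1) (ltW bi) (ltW vp : v \is Num.nneg)
    (mulr_ge0 (ltW C0) (ltW up) : C * u \is Num.nneg) h2.

  rewrite (powRM _ (ltW C0) (ltW up)) /u /v -!powRrM mulfV ?gt_eqF // (powRr1 L0) (powRr1 (ltW D0)) in h3.
  exact: h3.
have F0 z : 0 <= F z by exact: powR_ge0.
have I0 := @li_ge0 R n g a b F ab (fun z _ => F0 z).
have [r Ir] : exists r, line_integral g a b F = r%:E.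
  move: I0 hI; case: (line_integral g a b F) => [r| |] //; first by exists r.
have xin : (g @` `[a, b]) x by exists a; [rewrite /= in_itv /= lexx ab | exact: ga].
rewrite Ir -EFinM lee_fin; rewrite Ir lee_fin in hI.
have Sne : [set F z | z in g @` `[a, b]] !=set0 by exists (F x), x.
suff key : forall z, (g @` `[a, b]) z -> L^-1 * r <= 2 * C * F z.
  have C2 : 0 < 2 * C by rewrite mulr_gt0.
  rewrite [2 * C * _]mulrC -ler_pdivrMr //; apply: lb_le_inf; first exact: Sne.
  move=> _ [z gz <-].
  by rewrite ler_pdivrMr // [F z * _]mulrC; exact: key.
move=> _ [t0 t0in <-].
set d0 := dist_bd O (g t0).
have d0p : 0 < d0 by apply: dpos; exists t0.
have [L00|Lp] := eqVneq L 0.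
  by rewrite L00 invr0 mul0r mulr_ge0 // mulr_ge0 // ltW.
have Lp' : 0 < L by rewrite lt_def Lp L0.
have h1 : L^-1 * r <= C * L `^ (alpha - 1).
  rewrite ler_pdivrMl // mulrCA -e1; exact: hI.
have t0ab : a <= t0 <= b by move: t0in; rewrite /= in_itv.
rewrite /F -/d0.
have p0 : 0 <= L `^ (alpha - 1) := powR_ge0 _ _.
have dp0 : 0 <= d0 `^ (alpha - 1) := powR_ge0 _ _.
have [hd|hd] := leP d0 (2 * L).
  apply: le_trans h1 _.
  have h2 : (2 * L) `^ (alpha - 1) <= d0 `^ (alpha - 1) by apply: powR_anti.
  rewrite powRM // in h2.
  have h22 : 1 <= 2 * 2 `^ (alpha - 1).
    rewrite -{1}(@powRr1 _ 2) // -powRD ?pnatr_eq0 ?implybT // addrC subrK.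
    by have := ler_powR (a:=2) (ler1n _ _) (ltW al0); rewrite powRr0.
  apply: (@le_trans _ _ (C * (2 * 2 `^ (alpha - 1) * L `^ (alpha - 1)))).
    by rewrite ler_pM2l // ler_peMl.
  rewrite (_ : 2 * C * d0 `^ (alpha - 1) = C * (2 * d0 `^ (alpha - 1))); last by ring.
  by rewrite -mulrA ler_pM2l // ler_pM2l.
have d2 : 0 < d0 / 2 by rewrite divr_gt0.
have bound : forall z, (g @` `[a, b]) z -> 0 <= F z <= (d0 / 2) `^ (alpha - 1).
  move=> _ [t tin <-]; rewrite F0 /=; apply: powR_anti => //.
  have tab : a <= t <= b by move: tin; rewrite /= in_itv.
  have := d_lip (g t0) (g t) bne; rewrite -/d0.
  have := @edist_le_len R n g a b t0 t rg t0ab tab; rewrite -/L.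
  lra.
have := li_upper F ((d0 / 2) `^ (alpha - 1)) ab rg bound.
rewrite Ir lee_fin -/L => h3.
have h4 : L^-1 * r <= (d0 / 2) `^ (alpha - 1) by rewrite ler_pdivrMl // mulrC.
apply: le_trans h4 _.
rewrite powRM ?invr_ge0 //; last exact: ltW.
have -> : 2^-1 `^ (alpha - 1) = 2 `^ (1 - alpha) :> R.
  by rewrite -powR_inv1 // -powRrM; congr (_ `^ _); ring.
have h5 : 2 `^ (1 - alpha) <= 2 :> R.
  have := ler_powR (a:=2) (ler1n _ _) (_ : 1 - alpha <= 1); rewrite powRr1 //; apply.
  by rewrite lerBlDr lerDl ltW.
apply: (@le_trans _ _ (d0 `^ (alpha - 1) * 2)).
  by rewrite ler_wpM2l.
rewrite mulrC -mulrA ler_pM2l // ler_peMl //.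
Qed.
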